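(* Let $\mathcal{G}$ be a finite groupoid and let $\mathcal{H}$ and $\mathcal{K}$ be connected wide subgroupoids of $\mathcal{G}$. Then there exists an isomorphism of $\mathbb{C}$-vector spaces \[\mathbb{C}_{\mathcal{H}\backslash\mathcal{G}/\mathcal{K}}\cong \mathrm{Nat}(Y_\mathcal{H},Y_\mathcal{K}),\] where $\mathrm{Nat}(Y_\mathcal{H},Y_\mathcal{K})$ denotes the vector space of natural transformations $Y_\mathcal{H}\Rightarrow Y_\mathcal{K}$ between functors $\mathcal{G}\to\mathbf{Vect}_\mathbb{C}$.
   Context: A groupoid is a category in which every morphism is invertible; all groupoids are finite and nonempty; $\mathcal{C}_0,\mathcal{C}_1$ denote objects and morphisms, and $gg'$ denotes composition $g\circ g'$. A subgroupoid is a subcategory that is a groupoid; it is wide if it contains all objects, connected if any two of its objects are joined by a morphism of it. Define \[\mathbb{C}_{\mathcal{H}\backslash\mathcal{G}/\mathcal{K}}:=\{\phi:\mathcal{G}_1\to\mathbb{C}\mid \phi(h^{-1}gk)=\phi(g)\text{ for all }h\in\mathcal{H}_1,g\in\mathcal{G}_1,k\in\mathcal{K}_1\text{ with }\mathrm{cod}\,h=\mathrm{cod}\,g,\ \mathrm{dom}\,g=\mathrm{cod}\,k\},\] a vector space under pointwise operations. For an object $G$ let $\mathrm{Mor}_\mathcal{G}(-,G):=\coprod_{G'\in\mathcal{G}_0}\mathcal{G}(G',G)$. For a subgroupoid $\mathcal{H}$, the functor $Y_\mathcal{H}:\mathcal{G}\to\mathbf{Vect}_\mathbb{C}$ is given on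 objects by $Y_\mathcal{H}(G):=\{f:\mathrm{Mor}_\mathcal{G}(-,G)\to\mathbb{C}\mid f(gh)=f(g)\text{ for all } g\in\mathrm{Mor}_\mathcal{G}(-,G),\ h\in\mathcal{H}_1 \text{ with } \mathrm{dom}\,g=\mathrm{cod}\,h\}$ (pointwise vector space structure), and on a morphism $g:G\to G'$ by $Y_\mathcal{H}(g)(f):=f(g^{-1}\,-)$, i.e. $x\mapsto f(g^{-1}x)$ for $x\in\mathrm{Mor}_\mathcal{G}(-,G')$. *)

(* Defs.v *)
From mathcomp Require Import all_boot all_algebra.
From mathcomp Require Import reals complex.
Set Implicit Arguments.
Unset Strict Implicit.
Unset Printing Implicit Defensive.
Import GRing.Theory.
Local Open Scope ring_scope.

(* A finite groupoid: finite types of objects and morphisms, domain and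
   codomain maps, identities, composition [comp g g'] = g o g' (meaningful
   when dom g = cod g') and inverses, with the groupoid axioms. *)
Record groupoid := Groupoid {
  obj : finType;
  mor : finType;
  dom : mor -> obj;
  cod : mor -> obj;
  gid : obj -> mor;
  comp : mor -> mor -> mor;
  inv : mor -> mor;
  dom_id : forall x, dom (gid x) = x;
  cod_id : forall x, cod (gid x) = x;
  dom_comp : forall g g', dom g = cod g' -> dom (comp g g') = dom g';
  cod_comp : forall g g', dom g = cod g' -> cod (comp g g') = cod g;
  compA : forall g g' g'', dom g = cod g' -> dom g' = cod g'' ->
    comp g (comp g' g'') = comp (comp g g') g'';
  comp_idl : forall g, comp (gid (cod g)) g = g;
  comp_idr : forall g, comp g (gid (dom g)) = g;
  dom_inv : forall g, dom (inv g) = cod g;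
  cod_inv : forall g, cod (inv g) = dom g;
  comp_invr : forall g, comp g (inv g) = gid (cod g);
  comp_invl : forall g, comp (inv g) g = gid (dom g)
}.

Section Defs.
Variable G : groupoid.
Local Notation O := (obj G).
Local Notation M := (mor G).
Local Notation dom := (@dom G).
Local Notation cod := (@cod G).
Local Notation comp := (@comp G).
Local Notation inv := (@inv G).
Local Notation gid := (@gid G).

(* A wide subgroupoid, given by its set of morphisms: it contains every
   identity (hence all objects), and is closed under composition of
   composable morphisms and under inverses. *)
Definition wide_subgroupoid (H : {pred M}) : Prop :=
  [/\ forall x : O, gid x \in H,
      forall h h', h \in H -> h' \in H -> dom h = cod h' -> comp h h' \in H
    & forall h, h \in H -> inv h \in H].

Definition connected_sub (H : {pred M}) : Prop :=
  forall x y : O, exists h, [/\ h \in H, dom h = x & cod h = y].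

Variable C : fieldType.

Definition double_coset_fun (H K : {pred M}) (phi : M -> C) : Prop :=
  forall h g k, h \in H -> k \in K -> cod h = cod g -> dom g = cod k ->
    phi (comp (comp (inv h) g) k) = phi g.

(* An element of Y_H(x) is a function Mor(-,x) -> C; we represent it by a
   function M -> C of which only the values on morphisms with codomain x
   matter.  [eqOn x f f'] is equality as elements of C^{Mor(-,x)}. *)
Definition eqOn (x : O) (f f' : M -> C) : Prop :=
  forall g, cod g = x -> f g = f' g.

Definition inY (H : {pred M}) (x : O) (f : M -> C) : Prop :=
  forall g h, cod g = x -> h \in H -> dom g = cod h -> f (comp g h) = f g.

(* Y_H(g)(f) := f(g^{-1} -), for g : x -> x' (same formula for every H). *)
Definition Ymap (g : M) (f : M -> C) : M -> C := fun y => f (comp (inv g) y).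

(* eta : forall x, Y_H(x) -> Y_K(x) is a natural transformation Y_H => Y_K:
   each component is a well-defined C-linear map Y_H(x) -> Y_K(x), and
   the naturality squares commute. *)
Definition is_nat_trans (H K : {pred M}) (eta : O -> (M -> C) -> (M -> C))
  : Prop :=
  [/\ (forall x f, inY H x f -> inY K x (eta x f)),
      (forall x f f', inY H x f -> inY H x f' -> eqOn x f f' ->
         eqOn x (eta x f) (eta x f')),
      (forall x (a : C) f f', inY H x f -> inY H x f' ->
         eqOn x (eta x (fun y => a * f y + f' y))
                (fun y => a * eta x f y + eta x f' y))
    & (forall g f, inY H (dom g) f ->
         eqOn (cod g) (eta (cod g) (Ymap g f)) (Ymap g (eta (dom g) f)))].

Definition nat_eq (H : {pred M}) (eta eta' : O -> (M -> C) -> (M -> C))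
  : Prop :=
  forall x f, inY H x f -> eqOn x (eta x f) (eta' x f).

Definition dc_nat_iso (H K : {pred M}) : Prop :=
  exists Phi : (M -> C) -> O -> (M -> C) -> (M -> C),
  [/\ (forall phi, double_coset_fun H K phi -> is_nat_trans H K (Phi phi)),
      (forall (a : C) phi psi, double_coset_fun H K phi ->
         double_coset_fun H K psi ->
         nat_eq H (Phi (fun g => a * phi g + psi g))
                  (fun x f y => a * Phi phi x f y + Phi psi x f y)),
      (forall phi psi, double_coset_fun H K phi -> double_coset_fun H K psi ->
         nat_eq H (Phi phi) (Phi psi) -> phi = psi)
    & (forall eta, is_nat_trans H K eta ->
         exists2 phi, double_coset_fun H K phi & nat_eq H (Phi phi) eta)].
End Defs.

(* Main.v *)
Require Import Defs.
From mathcomp Require Import all_boot all_algebra.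
From mathcomp Require Import reals complex.
From Stdlib Require Import FunctionalExtensionality.
Set Implicit Arguments.
Unset Strict Implicit.
Unset Printing Implicit Defensive.
Import GRing.Theory Num.Theory.
Local Open Scope ring_scope.
Local Notation comp := Defs.comp.
Local Notation inv := Defs.inv.
Local Notation dom := Defs.dom.
Local Notation cod := Defs.cod.
Local Notation gid := Defs.gid.

Lemma cancel_l (G : groupoid) (g y : mor G) : dom g = cod y ->
  comp (inv g) (comp g y) = y.
Proof.
move=> e; rewrite (Defs.compA (dom_inv g) e).
by rewrite comp_invl e comp_idl.
Qed.

Lemma cancel_r (G : groupoid) (g y : mor G) : cod g = cod y ->
  comp g (comp (inv g) y) = y.
Proof.
move=> e; rewrite (Defs.compA (esym (cod_inv g))); last by rewrite dom_inv e.
by rewrite comp_invr e comp_idl.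
Qed.

Lemma cancel_rr (G : groupoid) (g h : mor G) : dom g = cod h ->
  comp (comp g h) (inv h) = g.
Proof.
move=> e; rewrite -(Defs.compA e); last by rewrite cod_inv.
by rewrite comp_invr -e comp_idr.
Qed.

Lemma inv_inv (G : groupoid) (g : mor G) : inv (inv g) = g.
Proof.
have h1 := @cancel_l G (inv g) g (dom_inv g).
rewrite comp_invl in h1.
by rewrite -{2}h1 -[X in gid X](cod_inv g) -(dom_inv (inv g)) comp_idr.
Qed.

Lemma inv_uniq (G : groupoid) (w c : mor G) : dom w = cod c ->
  comp w c = gid (dom c) -> w = inv c.
Proof.
move=> e wc.
rewrite -(comp_idr w) e -comp_invr (Defs.compA e); last by rewrite cod_inv.
by rewrite wc -(cod_inv c) comp_idl.
Qed.

Lemma inv_comp (G : groupoid) (a b : mor G) : dom a = cod b ->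
  inv (comp a b) = comp (inv b) (inv a).
Proof.
move=> e; symmetry; apply: inv_uniq.
  by rewrite dom_comp ?dom_inv ?cod_inv ?cod_comp.
rewrite dom_comp //.
rewrite -Defs.compA ?dom_inv ?cod_comp ?dom_comp ?cod_inv //.
by rewrite cancel_l // comp_invl.
Qed.

Lemma inv_gid (G : groupoid) (c : obj G) : inv (gid c) = gid c.
Proof.
by rewrite -{1}(comp_idl (inv (gid c))) cod_inv dom_id comp_invr cod_id.
Qed.

Lemma sum_comp (C : numFieldType) (G : groupoid) (g0 : mor G)
  (P : pred (mor G)) (F : mor G -> C) :
  \sum_(g | (cod g == cod g0) && P g) F g =
  \sum_(g | (cod g == dom g0) && P (comp g0 g)) F (comp g0 g).
Proof.
rewrite (reindex_onto (fun g => comp g0 g) (fun g => comp (inv g0) g)).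
  apply: eq_bigl => j /=.
  case: (eqVneq (cod j) (dom g0)) => ej.
    by rewrite cod_comp ?ej // eqxx cancel_l ?ej // eqxx /= andbT.
  apply/negbTE/negP => /andP[/andP[/eqP e1 _] /eqP e2].
  move: ej; rewrite -e2 cod_comp ?cod_inv ?eqxx //.
  by rewrite dom_inv e1.
by move=> i /andP[/eqP e _]; rewrite cancel_r.
Qed.

Definition fH (C : numFieldType) (G : groupoid) (H : {pred mor G}) : mor G -> C :=
  fun g => if g \in H then 1 else 0.
Definition Nc (C : numFieldType) (G : groupoid) (H : {pred mor G}) (x : obj G) : C :=
  \sum_(h | (cod h == x) && (h \in H)) 1.
Definition Phi (C : numFieldType) (G : groupoid) (phi : mor G -> C) (x : obj G)
  (f : mor G -> C) : mor G -> C :=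
  fun y => \sum_(g | cod g == x) f g * phi (comp (inv g) y).

Lemma memH_compl (G : groupoid) (H : {pred mor G}) h z :
  wide_subgroupoid H -> h \in H -> dom h = cod z -> (comp h z \in H) = (z \in H).
Proof.
case=> H1 H2 H3 hH e; apply/idP/idP => [hz|zH]; last exact: H2.
rewrite -(cancel_l e); apply: H2 => //; first exact: H3.
by rewrite dom_inv cod_comp.
Qed.

Lemma memH_compr (G : groupoid) (H : {pred mor G}) g h :
  wide_subgroupoid H -> h \in H -> dom g = cod h -> (comp g h \in H) = (g \in H).
Proof.
case=> H1 H2 H3 hH e; apply/idP/idP => [gh|gH]; last exact: H2.
rewrite -(cancel_rr e); apply: H2 => //; first exact: H3.
by rewrite dom_comp // cod_inv.
Qed.

Lemma fH_inY (C : numFieldType) (G : groupoid) (H : {pred mor G}) x :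
  wide_subgroupoid H -> inY H x (fH C H).
Proof. by move=> wH g h _ hH e; rewrite /fH memH_compr. Qed.

Lemma Nc_dom_cod (C : numFieldType) (G : groupoid) (H : {pred mor G}) h :
  wide_subgroupoid H -> h \in H -> Nc C H (dom h) = Nc C H (cod h).
Proof.
move=> wH hH; rewrite /Nc (sum_comp h).
apply: eq_bigl => g; case: (eqVneq (cod g) (dom h)) => //= e.
by rewrite memH_compl.
Qed.

Lemma Nc_const (C : numFieldType) (G : groupoid) (H : {pred mor G}) x y :
  wide_subgroupoid H -> connected_sub H -> Nc C H x = Nc C H y.
Proof.
move=> wH cH; have [h [hH <- <-]] := cH x y; exact: Nc_dom_cod.
Qed.

Lemma Nc_neq0 (C : numFieldType) (G : groupoid) (H : {pred mor G}) x :
  wide_subgroupoid H -> Nc C H x != 0.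
Proof.
case=> H1 _ _; rewrite /Nc sumr_const pnatr_eq0 -lt0n.
by apply/card_gt0P; exists (gid x); rewrite unfold_in /= cod_id eqxx H1.
Qed.

Lemma sum_comp' (C : numFieldType) (G : groupoid) (g0 : mor G) (F : mor G -> C) :
  \sum_(g | cod g == cod g0) F g = \sum_(g | cod g == dom g0) F (comp g0 g).
Proof.
rewrite (eq_bigl (fun g => (cod g == cod g0) && xpredT g)); last by move=> g; rewrite andbT.
by rewrite sum_comp; apply: eq_bigl => g; rewrite andbT.
Qed.

Lemma phi_K (C : numFieldType) (G : groupoid) (H K : {pred mor G}) (phi : mor G -> C) w k :
  double_coset_fun H K phi -> wide_subgroupoid H -> k \in K -> dom w = cod k ->
  phi (comp w k) = phi w.
Proof.
move=> D [H1 _ _] kK e.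
by have := D (gid (cod w)) w k (H1 _) kK (cod_id _) e; rewrite inv_gid comp_idl.
Qed.

Lemma phi_H (C : numFieldType) (G : groupoid) (H K : {pred mor G}) (phi : mor G -> C) h w :
  double_coset_fun H K phi -> wide_subgroupoid K -> h \in H -> cod h = cod w ->
  phi (comp (inv h) w) = phi w.
Proof.
move=> D [K1 _ _] hH e.
have := D h w (gid (dom w)) hH (K1 _) e (esym (cod_id _)).
have dd : dom (comp (inv h) w) = dom w by rewrite dom_comp // dom_inv.
by rewrite -dd comp_idr.
Qed.

Lemma Phi_fH (C : numFieldType) (G : groupoid) (H K : {pred mor G}) (phi : mor G -> C) x y :
  double_coset_fun H K phi -> wide_subgroupoid K -> cod y = x ->
  Phi phi x (fH C H) y = Nc C H x * phi y.
Proof.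
move=> D wK ey.
rewrite /Phi (eq_bigr (fun g => if g \in H then phi (comp (inv g) y) else 0)); last first.
  by move=> g _; rewrite /fH; case: ifP; rewrite ?mul1r ?mul0r.
rewrite -big_mkcondr /Nc mulr_suml; apply: eq_bigr => g /andP[/eqP eg gH].
by rewrite mul1r (phi_H D) // eg.
Qed.

Lemma Phi_nat (C : numFieldType) (G : groupoid) (H K : {pred mor G}) (phi : mor G -> C) :
  double_coset_fun H K phi -> wide_subgroupoid H -> wide_subgroupoid K ->
  is_nat_trans H K (Phi phi).
Proof.
move=> D wH wK; split.
- move=> x f fY y k ey kK e; rewrite /Phi; apply: eq_bigr => g /eqP eg.
  congr (_ * _).
  rewrite (Defs.compA (g:=inv g) (g':=y) (g'':=k)) ?dom_inv ?eg ?ey //.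
  by rewrite (phi_K D) // dom_comp // dom_inv eg ey.
- move=> x f f' fY f'Y eff y ey; rewrite /Phi; apply: eq_bigr => g /eqP eg.
  by rewrite eff.
- move=> x a f f' _ _ y ey; rewrite /Phi mulr_sumr -big_split; apply: eq_bigr => g _.
  by rewrite mulrDl mulrA.
- move=> g0 f fY y ey; rewrite /Phi /Ymap sum_comp'; apply: eq_bigr => g /eqP eg.
  rewrite cancel_l // inv_comp // (Defs.compA (g:=inv g) (g':=inv g0) (g'':=y)) //.
    by rewrite dom_inv cod_inv.
  by rewrite dom_inv.
Qed.

Lemma inY_eqOn (C : numFieldType) (G : groupoid) (H : {pred mor G}) x (f f' : mor G -> C) :
  eqOn x f f' -> inY H x f -> inY H x f'.
Proof.
move=> e fY g h eg hH d.
rewrite -(e (comp g h)); last by rewrite cod_comp.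
by rewrite -(e g) //; exact: fY.
Qed.

Lemma inY_lin (C : numFieldType) (G : groupoid) (H : {pred mor G}) x a (f f' : mor G -> C) :
  inY H x f -> inY H x f' -> inY H x (fun y => a * f y + f' y).
Proof. by move=> fY f'Y g h eg hH d; rewrite fY // f'Y. Qed.

Lemma inY0 (C : numFieldType) (G : groupoid) (H : {pred mor G}) x :
  inY H x (fun _ => 0 : C).
Proof. by []. Qed.

Lemma eta0 (C : numFieldType) (G : groupoid) (H K : {pred mor G}) eta x :
  @is_nat_trans G C H K eta -> eqOn x (eta x (fun _ => 0)) (fun _ => 0).
Proof.
case=> _ _ L _.
have := L x 1 (fun _ => 0) (fun _ => 0) (@inY0 C G H x) (@inY0 C G H x).
have -> : (fun _ : mor G => 1 * 0 + 0) = (fun _ : mor G => 0 : C).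
  by apply: functional_extensionality => ?; rewrite mul1r addr0.
move=> e y ey; have := e y ey; rewrite mul1r => h.
have : eta x (fun _ => 0) y + eta x (fun _ => 0) y - eta x (fun _ => 0) y =
       eta x (fun _ => 0) y - eta x (fun _ => 0) y by rewrite -h.
by rewrite addrK subrr.
Qed.

Lemma eta_sum (C : numFieldType) (G : groupoid) (H K : {pred mor G}) eta x
  (I : Type) (r : seq I) (P : pred I) (c : I -> C) (u : I -> mor G -> C) :
  @is_nat_trans G C H K eta -> (forall i, P i -> inY H x (u i)) ->
  inY H x (fun z => \sum_(i <- r | P i) c i * u i z) /\
  eqOn x (eta x (fun z => \sum_(i <- r | P i) c i * u i z))
         (fun z => \sum_(i <- r | P i) c i * eta x (u i) z).
Proof.
move=> N uY; elim: r => [|i r [IHY IHe]].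
  have -> : (fun z => \sum_(i <- [::] | P i) c i * u i z) = (fun _ => 0).
    by apply: functional_extensionality => z; rewrite big_nil.
  split; first exact: inY0.
  by move=> y ey; rewrite big_nil; exact: (@eta0 C G H K eta x N y ey).
case Pi: (P i).
  have -> : (fun z => \sum_(j <- i :: r | P j) c j * u j z) =
            (fun z => c i * u i z + (fun z => \sum_(j <- r | P j) c j * u j z) z).
    by apply: functional_extensionality => z; rewrite big_cons Pi.
  split; first by apply: inY_lin => //; exact: uY.
  move=> y ey; rewrite big_cons Pi.
  case: N => _ _ L _.
  by rewrite (L x (c i) (u i) _ (uY i Pi) IHY y ey) IHe.
have -> : (fun z => \sum_(j <- i :: r | P j) c j * u j z) =
          (fun z => \sum_(j <- r | P j) c j * u j z).
  by apply: functional_extensionality => z; rewrite big_cons Pi.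
by split => // y ey; rewrite big_cons Pi; exact: IHe.
Qed.

Lemma memH_inv (G : groupoid) (H : {pred mor G}) a :
  wide_subgroupoid H -> (inv a \in H) = (a \in H).
Proof.
case=> _ _ H3; apply/idP/idP => [/H3|/H3 //]; by rewrite inv_inv.
Qed.

Lemma count_coset (C : numFieldType) (G : groupoid) (H : {pred mor G}) z :
  wide_subgroupoid H ->
  \sum_(g | (cod g == cod z) && (comp (inv g) z \in H)) (1 : C) = Nc C H (dom z).
Proof.
move=> wH; symmetry; rewrite /Nc -(cod_inv z) (sum_comp (inv z)) dom_inv.
apply: eq_bigl => g; case: eqVneq => //= e.
by rewrite -(memH_inv _ wH) inv_comp ?inv_inv // dom_inv e.
Qed.

Definition Psi (C : numFieldType) (G : groupoid) (H : {pred mor G})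
  (eta : obj G -> (mor G -> C) -> mor G -> C) (z : mor G) : C :=
  (Nc C H (cod z))^-1 * eta (cod z) (fH C H) z.

Lemma Psi_dc (C : numFieldType) (G : groupoid) (H K : {pred mor G}) eta :
  wide_subgroupoid H -> wide_subgroupoid K -> @is_nat_trans G C H K eta ->
  double_coset_fun H K (Psi H eta).
Proof.
move=> wH wK N h g k hH kK ehg egk.
set w := comp (inv h) g.
have cw : cod w = dom h by rewrite /w cod_comp ?cod_inv // dom_inv.
have dw : dom w = cod k by rewrite /w dom_comp ?dom_inv.
have cwk : cod (comp w k) = dom h by rewrite cod_comp.
rewrite /Psi cwk (Nc_dom_cod _ wH hH) ehg; congr (_ * _).
case: N => Y W L Nt.
rewrite (Y (dom h) _ (fH_inY _ wH) w k cw kK dw).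
have E1 : eqOn (dom h) (fH C H) (Ymap (inv h) (fH C H)).
  by move=> z ez; rewrite /Ymap inv_inv /fH memH_compl.
have Yi : inY H (dom h) (Ymap (inv h) (fH C H)) := inY_eqOn E1 (fH_inY _ wH).
rewrite (W _ _ _ (fH_inY _ wH) Yi E1 w cw).
have := Nt (inv h) (fH C H); rewrite dom_inv cod_inv => nt.
by rewrite (nt (fH_inY _ wH) w cw) /Ymap inv_inv cancel_r // ehg.
Qed.

Lemma Psi_Phi (C : numFieldType) (G : groupoid) (H K : {pred mor G}) eta :
  wide_subgroupoid H -> connected_sub H -> wide_subgroupoid K ->
  @is_nat_trans G C H K eta -> nat_eq H (Phi (Psi H eta)) eta.
Proof.
move=> wH cH wK N x f fY y ey.
have N' := N; case: N' => Y W L Nt.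
rewrite /Phi (eq_bigr (fun g => (f g * (Nc C H x)^-1) * eta x (Ymap g (fH C H)) y)); last first.
  move=> g /eqP eg; rewrite -mulrA; congr (_ * _).
  have cc : cod (comp (inv g) y) = dom g by rewrite cod_comp ?cod_inv // dom_inv eg.
  rewrite /Psi cc (Nc_const _ (dom g) x wH cH); congr (_ * _).
  have := Nt g (fH C H) (fH_inY _ wH) y; rewrite eg => nt.
  by rewrite (nt ey).
have uY : forall g, cod g == x -> inY H x (Ymap g (fH C H)).
  move=> g /eqP eg z h ez hH d; rewrite /Ymap.
  rewrite (Defs.compA (g:=inv g) (g':=z) (g'':=h)) ?dom_inv ?eg ?ez //.
  by rewrite /fH memH_compr // dom_comp // dom_inv eg ez.
have [FY FE] := eta_sum (index_enum (mor G)) (fun g => f g * (Nc C H x)^-1) N uY.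
rewrite -(FE y ey).
have EF : eqOn x (fun z => \sum_(g | cod g == x) f g * (Nc C H x)^-1 * Ymap g (fH C H) z) f.
  move=> z ez.
  rewrite (eq_bigr (fun g => if comp (inv g) z \in H then f z * (Nc C H x)^-1 else 0)); last first.
    move=> g /eqP eg; rewrite /Ymap /fH; case: ifP => hin; last by rewrite mulr0.
    rewrite mulr1; congr (_ * _).
    rewrite -{1}(cancel_r (g:=g) (y:=z)); last by rewrite eg ez.
    by rewrite fY // cod_comp ?cod_inv // dom_inv eg ez.
  rewrite -big_mkcondr -[X in \sum_(_ | _) X]mul1r -mulr_suml -ez count_coset //.
  rewrite ez (Nc_const _ (dom z) x wH cH) mulrCA mulfV ?mulr1 //.
  exact: Nc_neq0.
by rewrite (W x _ _ FY fY EF y ey).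
Qed.

Lemma main (C : numFieldType) (G : groupoid) (H K : {pred mor G}) :
  wide_subgroupoid H -> connected_sub H ->
  wide_subgroupoid K -> dc_nat_iso C H K.
Proof.
move=> wH cH wK; exists (@Phi C G); split.
- by move=> phi D; exact: Phi_nat.
- move=> a phi psi _ _ x f _ y _; rewrite /Phi mulr_sumr -big_split.
  by apply: eq_bigr => g _; rewrite mulrDr !mulrA [f g * a]mulrC.
- move=> phi psi Dphi Dpsi E; apply: functional_extensionality => y.
  have := E (cod y) (fH C H) (fH_inY _ wH) y erefl.
  rewrite (Phi_fH Dphi wK erefl) (Phi_fH Dpsi wK erefl) => /(mulfI (Nc_neq0 _ _ wH)).
  done.
- move=> eta N; exists (Psi H eta); first exact: Psi_dc.
  exact: (Psi_Phi wH cH wK N).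
Qed.

Theorem theorem5p4 (R : realType) (G : groupoid) (H K : {pred mor G}) :
  (0 < #|obj G|)%N ->
  wide_subgroupoid H -> connected_sub H ->
  wide_subgroupoid K -> connected_sub K ->
  dc_nat_iso (R[i]) H K.
Proof. by move=> _ wH cH wK _; exact: main. Qed.
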